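(* The twisted arrow category $\mathrm{Tw}(sOp)$ of the operad $sOp$ of single-coloured operads, equivalently the Moerdijk--Weiss dendroidal category $\Omega$, is not quasi-Gr\''obner.
   Context: Here $sOp$ is the (set-)operad whose algebras are single-coloured (symmetric) operads, whose operations are operadic trees (rooted trees with half-edges, ordered leaves, ordered half-edges at each vertex, and ordered vertices). For an operad $P$, the twisted arrow category $\mathrm{Tw}(P)$ has the operations of $P$ as objects; a morphism from an operation $p$ of arity $n$ to an operation of arity $m$ is represented by a planar rooted tree of height 3 (height 2 if $n=0$) with $m$ input leaves indexed $1,\dots,m$, with exactly one middle vertex marked by $p$, a lower vertex marked by some $q_0$ connected to the middle vertex by its first input edge, and upper vertices marked by $q_1,\dots,q_n$ grafted on the inputs of $p$ (arities matching, leaf indices increasing in planar order above each vertex); the target is the evaluation of the tree, and composition is by grafting and evaluating the subtrees not containing the middle vertex. A category $\mathcal{D}$ is quasi-Gr\''obner if there is an essentially surjective functor $\Phi:\mathcal{C}\to\mathcal{D}$ satisfying property (F) (for every object $d$ there are finitely many $f_i:d\to\Phi(c_i)$ through which every $f:d\to\Phi(c)$ factors as $\Phi(g)\circ f_i$) with $\mathcal{C}$ Gr\''obner (admissible well-orders on morphisms out of each object, and the posets $|c/\mathcal{C}|$ Noetherian). For quasi-Gr\''obner categories and left-Noetherian rings $k$, the category of modules (functors to $k$-modules) is locally Noetherian. *)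

(* Defs.v *)
From HB Require Import structures.
From mathcomp Require Import all_boot.
From Stdlib Require Import ProofIrrelevance.

Set Implicit Arguments.
Unset Strict Implicit.
Unset Printing Implicit Defensive.

Record category := Category {
  Obj : Type;
  Hom : Obj -> Obj -> Type;
  idm : forall x, Hom x x;
  comp : forall x y z, Hom y z -> Hom x y -> Hom x z;
  comp_id_l : forall x y (f : Hom x y), comp (idm y) f = f;
  comp_id_r : forall x y (f : Hom x y), comp f (idm x) = f;
  comp_assoc : forall x y z w (h : Hom z w) (g : Hom y z) (f : Hom x y),
      comp h (comp g f) = comp (comp h g) f }.

Arguments Hom {c} x y.
Arguments idm {c} x.
Arguments comp {c x y z} g f.

Record functor (C D : category) := Functor {
  fobj : Obj C -> Obj D;
  fmap : forall x y, Hom x y -> Hom (fobj x) (fobj y);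
  fmap_id : forall x, fmap (idm x) = idm (fobj x);
  fmap_comp : forall x y z (g : Hom y z) (f : Hom x y),
      fmap (comp g f) = comp (fmap g) (fmap f) }.

Arguments fobj {C D} _ _.
Arguments fmap {C D} _ {x y} _.

Definition isomorphic (C : category) (x y : Obj C) : Prop :=
  exists (f : Hom x y) (g : Hom y x), comp g f = idm x /\ comp f g = idm y.

Definition ess_surj (C D : category) (F : functor C D) : Prop :=
  forall d : Obj D, exists c : Obj C, isomorphic (fobj F c) d.

Definition property_F (C D : category) (F : functor C D) : Prop :=
  forall d : Obj D, exists (n : nat) (cs : 'I_n -> Obj C)
    (fs : forall i : 'I_n, Hom d (fobj F (cs i))),
    forall (c : Obj C) (f : Hom d (fobj F c)),
      exists (i : 'I_n) (g : Hom (cs i) c), f = comp (fmap F g) (fs i).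

Definition strict_well_order (T : Type) (lt : T -> T -> Prop) : Prop :=
  [/\ (forall a, ~ lt a a),
      (forall a b c, lt a b -> lt b c -> lt a c),
      (forall a b, a = b \/ lt a b \/ lt b a)
    & well_founded lt].

Definition admissible_order (C : category) (x : Obj C)
    (lt : forall y : Obj C, Hom x y -> Hom x y -> Prop) : Prop :=
  (forall y, strict_well_order (lt y)) /\
  (forall y z (g : Hom y z) (f f' : Hom x y),
      lt y f f' -> lt z (comp g f) (comp g f')).

Definition noetherian (T : Type) (le : T -> T -> Prop) : Prop :=
  forall s : nat -> T, exists i j : nat, (i < j)%N /\ le (s i) (s j).

(* The poset |x/C|: morphisms out of x, f <= f' iff f' = g o f;
   (we keep the preorder, whose quotient by isomorphism is |x/C|;
   the Noetherian condition is insensitive to this quotient). *)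
Definition under_le (C : category) (x : Obj C)
    (a b : {y : Obj C & Hom x y}) : Prop :=
  exists g : Hom (projT1 a) (projT1 b), comp g (projT2 a) = projT2 b.

Definition grobner (C : category) : Prop :=
  forall x : Obj C,
    (exists lt, @admissible_order C x lt) /\ noetherian (@under_le C x).

Definition quasi_grobner (D : category) : Prop :=
  exists (C : category) (F : functor C D),
    [/\ grobner C, ess_surj F & property_F F].

(* A finite (non-planar) rooted tree, given by its edges 'I_tsize, its
   root edge, the parent map (an edge that is an input of a vertex is
   sent to the output edge of that vertex) and the set of inner edges,
   i.e. edges that are outputs of a vertex (vertices are identified with
   their output edges; an inner edge without inputs is a stump). *)
Record tree := Tree {
  tsize : nat;
  troot : 'I_tsize;
  tpar : 'I_tsize -> option 'I_tsize;
  tinner : {set 'I_tsize};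
  tpar_root : forall e, tpar e = None <-> e = troot;
  tpar_inner : forall e p, tpar e = Some p -> p \in tinner;
  tpar_wf : forall e, exists k, iter k (fun x => odflt x (tpar x)) e = troot }.

Definition edge (T : tree) := 'I_(tsize T).

(* Operations of the free coloured operad Omega(T): there is (exactly) one
   operation with output colour e and (unordered, distinct) input colours L
   iff tree_op L e, i.e. L and e bound a subtree of T. *)
Inductive tree_op (T : tree) : {set edge T} -> edge T -> Prop :=
| top_id (e : edge T) : tree_op [set e] e
| top_vertex (v : edge T) (Ls : edge T -> {set edge T}) :
    v \in tinner T ->
    (forall x : edge T, tpar x = Some v -> tree_op (Ls x) x) ->
    tree_op (\bigcup_(x | tpar x == Some v) Ls x) v.

(* Operad maps Omega(S) -> Omega(T): maps on colours sending every operation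
   (L; e) of Omega(S) to an operation of Omega(T) with profile (f L; f e)
   (in particular the colours f(l), l in L, must be pairwise distinct).
   Since all hom-sets of Omega(T) are subsingletons, this is exactly an
   operad morphism. *)
Definition omega_map (S T : tree) (f : edge S -> edge T) : Prop :=
  forall (L : {set edge S}) (e : edge S),
    tree_op L e -> {in L &, injective f} /\ tree_op (f @: L) (f e).

Definition omega_hom (S T : tree) := {f : edge S -> edge T | omega_map f}.

Lemma omega_map_id (S : tree) : omega_map (fun x : edge S => x).
Proof.
move=> L e H; split; first by move=> x y _ _.
by rewrite imset_id.
Qed.

Lemma omega_map_comp (S T U : tree) (g : edge T -> edge U) (f : edge S -> edge T) :
  omega_map g -> omega_map f -> omega_map (fun x => g (f x)).
Proof.
move=> hg hf L e H.
have [injf Hf] := hf L e H.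
have [injg Hg] := hg _ _ Hf.
split.
  move=> x y xL yL /injg E.
  by apply: injf => //; apply: E; apply: imset_f.
have -> : [set g (f x) | x in L] = g @: (f @: L).
  by rewrite -imset_comp.
exact: Hg.
Qed.

Definition omega_id (S : tree) : omega_hom S S :=
  exist _ (fun x => x) (@omega_map_id S).

Definition omega_comp (S T U : tree) (g : omega_hom T U) (f : omega_hom S T) :
  omega_hom S U :=
  exist _ (fun x => proj1_sig g (proj1_sig f x))
    (omega_map_comp (proj2_sig g) (proj2_sig f)).

Lemma omega_comp_id_l (S T : tree) (f : omega_hom S T) :
  omega_comp (omega_id T) f = f.
Proof. by case: f => f hf; apply: subset_eq_compat. Qed.

Lemma omega_comp_id_r (S T : tree) (f : omega_hom S T) :
  omega_comp f (omega_id S) = f.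
Proof. by case: f => f hf; apply: subset_eq_compat. Qed.

Lemma omega_comp_assoc (S T U V : tree) (h : omega_hom U V) (g : omega_hom T U)
  (f : omega_hom S T) :
  omega_comp h (omega_comp g f) = omega_comp (omega_comp h g) f.
Proof. by apply: subset_eq_compat. Qed.

Definition Omega : category :=
  @Category tree omega_hom omega_id omega_comp
    omega_comp_id_l omega_comp_id_r omega_comp_assoc.

(* Main.v *)
Require Import Defs.
From mathcomp Require Import all_boot.
From Stdlib Require Import ClassicalEpsilon Classical.
Set Implicit Arguments.
Unset Strict Implicit.
Unset Printing Implicit Defensive.

Lemma qg_noeth (D : category) : quasi_grobner D -> forall d, noetherian (@under_le D d).
Proof.
move=> [C [F [grC esF propF]]] d s.
have [n [cs [fs Hfs]]] := propF d.
pose y k := projT1 (s k).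
have iso : forall k, {c : Obj C & {u : Hom (fobj F c) (y k) &
   {v : Hom (y k) (fobj F c) | Defs.comp u v = idm (y k)}}}.
  move=> k; have [c Hc] := constructive_indefinite_description _ (esF (y k)).
  exists c; have [u Hu] := constructive_indefinite_description _ Hc.
  exists u; have [v [_ Hv]] := constructive_indefinite_description _ Hu.
  by exists v.
pose c k := projT1 (iso k).
pose u k : Hom (fobj F (c k)) (y k) := projT1 (projT2 (iso k)).
pose v k : Hom (y k) (fobj F (c k)) := proj1_sig (projT2 (projT2 (iso k))).
have uv k : Defs.comp (u k) (v k) = idm (y k) := proj2_sig (projT2 (projT2 (iso k))).
pose P i k := exists g : Hom (cs i) (c k),
   Defs.comp (v k) (projT2 (s k)) = Defs.comp (fmap F g) (fs i).
have fac k : exists i, P i k.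
  have [i [g Hg]] := Hfs (c k) (Defs.comp (v k) (projT2 (s k))).
  by exists i, g.
have [i0 Hinf] : exists i0, forall m, exists k, m <= k /\ P i0 k.
  apply: NNPP => Hn.
  have Hb : forall i, exists m, forall k, m <= k -> ~ P i k.
    move=> i; apply: NNPP => Hm; apply: Hn; exists i => m.
    apply: NNPP => Hk; apply: Hm; exists m => k mk Pk; apply: Hk; by exists k.
  pose bnd i := proj1_sig (constructive_indefinite_description _ (Hb i)).
  pose M := \max_(i < n) bnd i.
  have [i Pi] := fac M.
  apply: (proj2_sig (constructive_indefinite_description _ (Hb i)) M _ Pi).
  exact: (@leq_bigmax _ bnd i).
pose next m := proj1_sig (constructive_indefinite_description _ (Hinf m)).
pose pk := fix pk k := match k with 0 => 0 | k'.+1 => (next (pk k')).+1 end.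
pose phi k := next (pk k).
have phiS k : phi k < phi k.+1.
  rewrite /phi /=.
  exact: (proj1 (proj2_sig (constructive_indefinite_description _ (Hinf (next (pk k)).+1)))).
have phimono : forall a b, a < b -> phi a < phi b.
  move=> a b ab; exact: (homo_ltn (fun x y z => @ltn_trans x y z) phiS ab).
have HP k : P i0 (phi k) :=
  proj2 (proj2_sig (constructive_indefinite_description _ (Hinf (pk k)))).
pose gsel k := proj1_sig (constructive_indefinite_description _ (HP k)).
have gselE k : Defs.comp (v (phi k)) (projT2 (s (phi k))) = Defs.comp (fmap F (gsel k)) (fs i0)
  := proj2_sig (constructive_indefinite_description _ (HP k)).
have [a [b [ab [h Hh]]]] := (grC (cs i0)).2 (fun k => existT _ (c (phi k)) (gsel k)).
simpl in h, Hh.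
exists (phi a), (phi b); split; first exact: phimono.
exists (Defs.comp (u (phi b)) (Defs.comp (fmap F h) (v (phi a)))).
rewrite -[RHS]comp_id_l -uv -[RHS]comp_assoc gselE -Hh fmap_comp -comp_assoc -gselE.
by rewrite !comp_assoc.
Qed.
Definition eta_tree : tree.
refine (@Tree 1 ord0 (fun _ => None) set0 _ _ _).
- move=> e; split=> // _; exact: ord1.
- by [].
- by move=> e; exists 0; rewrite (ord1 e).
Defined.

Definition cpar n (e : 'I_n.+1) : option 'I_n.+1 := if e == ord0 then None else Some ord0.

Definition corolla (n : nat) : tree.
refine (@Tree n.+1 ord0 (@cpar n) [set ord0] _ _ _).
- move=> e; rewrite /cpar; case: eqP => // ->; by split.
- by move=> e p; rewrite /cpar; case: eqP => // _ [<-]; rewrite inE.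
- move=> e; exists 1; rewrite /= /cpar; by case: eqP.
Defined.

Lemma eta_map (T : tree) (x : edge T) : omega_map (fun _ : edge eta_tree => x).
Proof.
move=> L e H; case: H => [e'|v Ls]; last by rewrite inE.
split; first by move=> a b _ _; rewrite (ord1 a) (ord1 b).
by rewrite imset_set1; apply: top_id.
Qed.

Definition rootmap n : omega_hom eta_tree (corolla n) :=
  exist _ (fun _ => ord0) (eta_map (T:=corolla n) ord0).

Lemma leaf_op n (L : {set edge (corolla n)}) x :
  tree_op L x -> x != ord0 -> L = [set x].
Proof.
case=> [//|v Ls]; rewrite inE => /eqP -> _; by rewrite eqxx.
Qed.

Lemma root_op n (L : {set edge (corolla n)}) e :
  tree_op L e -> e = ord0 -> L = [set e] \/ L = [set~ ord0].
Proof.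
case=> [e' _|v Ls vin Hc ev]; first by left.
subst v; right; apply/setP=> y; rewrite !inE; apply/bigcupP/idP.
- move=> [x]; rewrite /= /cpar; case: (x =P ord0) => // /eqP xn0 _.
  have := Hc x; rewrite /= /cpar (negbTE xn0) => /(_ erefl) Hx.
  rewrite (leaf_op Hx xn0) inE => /eqP ->; exact: xn0.
- move=> yn0; exists y; first by rewrite /= /cpar (negbTE yn0).
  have := Hc y; rewrite /= /cpar (negbTE yn0) => /(_ erefl) Hy.
  by rewrite (leaf_op Hy yn0) inE.
Qed.

Lemma vertex_op n : tree_op (T:=corolla n) [set~ ord0] ord0.
Proof.
have E : \bigcup_(x | tpar (t:=corolla n) x == Some ord0) [set x] = [set~ (ord0 : edge (corolla n))].
  apply/setP=> y; rewrite !inE; apply/bigcupP/idP.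
  - by move=> [x]; rewrite /= /cpar; case: (x =P ord0) => // /eqP xn0 _; rewrite inE => /eqP ->.
  - by move=> yn0; exists y; rewrite /= /cpar ?(negbTE yn0) ?inE.
rewrite -E; apply: top_vertex; first by rewrite inE.
by move=> x _; apply: top_id.
Qed.

Lemma no_map a b (g : omega_hom (corolla a.+2) (corolla b.+2)) :
  proj1_sig g ord0 = ord0 -> a = b.
Proof.
case: g => g /= Hg g0.
have [inj Hop] := Hg _ _ (vertex_op a.+2).
rewrite g0 in Hop.
have cg : #|g @: [set~ (ord0 : edge (corolla a.+2))]| = a.+2.
  by rewrite (card_in_imset inj) cardsC1 card_ord.
case: (root_op Hop erefl) => E; rewrite E in cg.
  by rewrite cards1 in cg.
by move: cg; rewrite cardsC1 card_ord => [[]].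
Qed.

Lemma omega_not_noeth : ~ noetherian (@under_le Omega eta_tree).
Proof.
move=> /(_ (fun k => existT _ (corolla k.+2) (rootmap k.+2))) [i [j [ij [g Hg]]]].
simpl in g, Hg.
have : proj1_sig g ord0 = ord0.
  by have := f_equal (fun h : omega_hom eta_tree (corolla j.+2) => proj1_sig h ord0) Hg.
move=> /no_map E; by rewrite E ltnn in ij.
Qed.

Theorem proposition5p6 : ~ quasi_grobner Omega.
Proof.
move=> H; exact (omega_not_noeth (@qg_noeth Omega H eta_tree)).
Qed.
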